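(* Let $g(x)=1-(1-x^2)^4$ for $|x|\le1$ and $g(x)=1$ otherwise. Fix $0\le q_o<\widetilde{q_o}$ and let $(q,p)$, respectively $(\widetilde q,\widetilde p)$, be the global solutions of $\dot q=p$, $\dot p=-g'(q)$ with initial data $(q_o,2)$, respectively $(\widetilde{q_o},2)$, at time $0$. Then $q(t)<\widetilde q(t)$ for all $t\ge0$. *)

(* Defs.v *)
From Stdlib Require Import Reals.
From Coquelicot Require Import Coquelicot.
Open Scope R_scope.

Definition g (x : R) : R :=
  if Rle_dec (Rabs x) 1 then 1 - (1 - x ^ 2) ^ 4 else 1.

Definition is_global_solution (q p : R -> R) : Prop :=
  forall t : R, is_derive q t (p t) /\ is_derive p t (- Derive g (q t)).

(* Main.v *)
Require Import Defs.
From Stdlib Require Import Reals.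
From Coquelicot Require Import Coquelicot.
From Stdlib Require Import Lra Psatz Classical.
Open Scope R_scope.

Lemma g_bound y : Rabs (g y - 1) <= (y^2-1)^4.
Proof.
  unfold g; destruct Rle_dec.
  - replace (1 - (1-y^2)^4 - 1) with (-((y^2-1)^4)) by ring.
    rewrite Rabs_Ropp, Rabs_pos_eq. lra.
    replace ((y^2-1)^4) with (((y^2-1)^2)^2) by ring. apply pow2_ge_0.
  - replace (1-1) with 0 by ring. rewrite Rabs_R0.
    replace ((y^2-1)^4) with (((y^2-1)^2)^2) by ring. apply pow2_ge_0.
Qed.

Lemma g_der_bnd x : x^2 = 1 -> derivable_pt_lim g x 0.
Proof.
  intros Hx eps He.
  assert (Hd : 0 < Rmin 1 (eps/81)) by (apply Rmin_glb_lt; lra).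
  exists (mkposreal _ Hd). intros h Hh0 Hh. simpl in Hh.
  assert (Hh1 : Rabs h < 1) by (eapply Rlt_le_trans; [exact Hh| apply Rmin_l]).
  assert (Hh2 : Rabs h < eps/81) by (eapply Rlt_le_trans; [exact Hh| apply Rmin_r]).
  assert (gx : g x = 1).
  { unfold g; destruct Rle_dec. rewrite Hx. ring.
    exfalso; apply n. pose proof (pow2_abs x). pose proof (Rabs_pos x). nra. }
  rewrite gx.
  set (a := Rabs h).
  assert (Ha : 0 < a) by (apply Rabs_pos_lt; auto).
  assert (Hb := g_bound (x+h)).
  assert (He2 : ((x+h)^2-1)^4 = a^4 * (2*x+h)^4).
  { assert (Ha2 : a^2 = h^2) by (unfold a; apply pow2_abs).
    replace ((x+h)^2-1) with (h*(2*x+h)) by nra.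
    replace (a^4) with ((a^2)^2) by ring. rewrite Ha2. ring. }
  assert (H9 : (2*x+h)^2 <= 9).
  { assert (x = 1 \/ x = -1) by (assert ((x-1)*(x+1) = 0) by nra;
       destruct (Rmult_integral _ _ H); [left|right]; lra).
    pose proof (Rabs_def2 _ _ Hh1).
    destruct H; subst x; nra. }
  assert (H81 : (2*x+h)^4 <= 81).
  { replace ((2*x+h)^4) with (((2*x+h)^2)^2) by ring.
    assert (0 <= (2*x+h)^2) by apply pow2_ge_0. nra. }
  replace ((g (x + h) - 1) / h - 0) with ((g (x+h) - 1) / h) by ring.
  unfold Rdiv. rewrite Rabs_mult, Rabs_inv. fold a.
  apply Rle_lt_trans with (a^4 * 81 * / a).
  - apply Rmult_le_compat_r. left; apply Rinv_0_lt_compat; auto.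
    eapply Rle_trans; [apply Hb|]. rewrite He2.
    apply Rmult_le_compat_l; [apply pow_le; lra | auto].
  - replace (a^4 * 81 * / a) with (81 * a^3 * (a * / a)) by ring.
    rewrite Rinv_r by lra. fold a in Hh1, Hh2.
    assert (a*a < 1) by nra. assert (a^3 <= a) by nra. lra.
Qed.

Lemma g_in x : -1 < x < 1 -> is_derive g x (8*x*(1-x^2)^3).
Proof.
  intros Hx.
  apply is_derive_ext_loc with (f := fun y => 1 - (1-y^2)^4).
  - apply locally_interval with (-1) 1; simpl; try lra.
    intros y H1 H2. unfold g. destruct Rle_dec; auto.
    exfalso; apply n; apply Rabs_le; lra.
  - auto_derive; auto. ring.
Qed.

Lemma g_out x : 1 < Rabs x -> is_derive g x 0.
Proof.
  intros Hx.
  apply is_derive_ext_loc with (f := fun _ => 1).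
  - destruct (Rle_dec 0 x).
    + rewrite Rabs_pos_eq in Hx by auto.
      apply locally_interval with 1 p_infty; simpl; auto.
      intros y H1 _. unfold g. destruct Rle_dec as [r'|]; auto.
      exfalso. rewrite Rabs_pos_eq in r' by lra. lra.
    + rewrite Rabs_left in Hx by lra.
      apply locally_interval with m_infty (-1); simpl; auto; try lra.
      intros y _ H1. unfold g. destruct Rle_dec as [r'|]; auto.
      exfalso. rewrite Rabs_left in r' by lra. lra.
  - apply is_derive_Reals. apply derivable_pt_lim_const.
Qed.

Lemma g_ex x : ex_derive g x.
Proof.
  destruct (Rlt_dec 1 (Rabs x)).
  - exists 0. apply g_out; auto.
  - destruct (Req_dec (x^2) 1).
    + exists 0. apply is_derive_Reals. apply g_der_bnd; auto.
    + exists (8*x*(1-x^2)^3). apply g_in.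
      assert (Rabs x <= 1) by lra.
      apply Rabs_le_between in H0. destruct H0.
      split; [destruct H0| destruct H1]; auto; subst; exfalso; apply H; ring.
Qed.

Lemma g_flat x : 1 <= x -> Derive g x = 0.
Proof.
  intros Hx. apply is_derive_unique.
  destruct Hx as [Hx|Hx].
  - apply g_out. rewrite Rabs_pos_eq; lra.
  - subst. apply is_derive_Reals. apply g_der_bnd. ring.
Qed.

Lemma g_range x : 0 <= g x <= 1.
Proof.
  unfold g; destruct Rle_dec; [|lra].
  assert (0 <= 1 - x^2 <= 1).
  { assert (x^2 <= 1).
    { rewrite <- (pow2_abs x).
      assert (0 <= Rabs x) by apply Rabs_pos. nra. }
    assert (0 <= x^2) by apply pow2_ge_0. lra. }
  set (u := 1 - x^2) in *.
  assert (0 <= u^4) by (apply pow_le; lra).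
  assert (u^4 <= 1).
  { replace (u^4) with ((u^2)^2) by ring. assert (0 <= u^2 <= 1) by nra. nra. }
  lra.
Qed.

Lemma g_strict a b : 0 <= a < 1 -> a < b -> g a < g b.
Proof.
  intros Ha Hab. unfold g.
  destruct (Rle_dec (Rabs a) 1) as [ra|ra].
  2: exfalso; apply ra; rewrite Rabs_pos_eq; lra.
  assert (0 < 1 - a^2) by nra.
  destruct (Rle_dec (Rabs b) 1) as [rb|rb].
  - rewrite Rabs_pos_eq in rb by lra.
    assert (0 <= 1 - b^2 < 1 - a^2) by nra.
    assert ((1-b^2)^4 < (1-a^2)^4).
    { set (u := 1 - b^2) in *. set (v := 1 - a^2) in *.
      assert (u^2 < v^2) by nra.
      replace (u^4) with ((u^2)^2) by ring. replace (v^4) with ((v^2)^2) by ring.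
      assert (0 <= u^2) by nra. nra. }
    lra.
  - assert (0 < (1-a^2)^4) by (apply pow_lt; auto). lra.
Qed.

Lemma mvt f df a b : (forall t, derivable_pt_lim f t (df t)) ->
  exists c, Rmin a b <= c <= Rmax a b /\ f b - f a = df c * (b - a).
Proof.
  intros H. apply (MVT_gen f a b df).
  - intros; apply is_derive_Reals; auto.
  - intros; apply derivable_continuous_pt. exists (df x); apply H.
Qed.

Lemma cont_eps f df x : (forall t, derivable_pt_lim f t (df t)) ->
  forall eps, 0 < eps -> exists delta, 0 < delta /\
   forall y, Rabs (y - x) < delta -> Rabs (f y - f x) < eps.
Proof.
  intros H eps He.
  assert (Hc : continuity_pt f x) by (apply derivable_continuous_pt; exists (df x); apply H).
  destruct (Hc eps He) as [d [Hd Hy]].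
  exists d; split; auto. intros y Hyd.
  destruct (Req_dec y x). subst. replace (f x - f x) with 0 by ring. rewrite Rabs_R0; auto.
  apply (Hy y). split; [split; [exact I | auto] | simpl; unfold R_dist; auto].
Qed.

Section Sol.
Variables (q p : R -> R) (qo : R).
Hypothesis Hs : is_global_solution q p.
Hypothesis Hq0 : q 0 = qo.
Hypothesis Hp0 : p 0 = 2.

Lemma dq t : derivable_pt_lim q t (p t).
Proof. apply is_derive_Reals. apply Hs. Qed.
Lemma dp t : derivable_pt_lim p t (- Derive g (q t)).
Proof. apply is_derive_Reals. apply Hs. Qed.

Lemma energy t : p t ^2 = 4 + 2 * g qo - 2 * g (q t).
Proof.
  set (E := fun t => p t ^2/2 + g (q t)).
  assert (HE : forall t, derivable_pt_lim E t 0).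
  { intros s. apply is_derive_Reals. unfold E.
    destruct (Hs s) as [H1 H2].
    assert (ex_derive p s) by (eexists; eauto).
    assert (ex_derive q s) by (eexists; eauto).
    assert (H3 := g_ex (q s)).
    auto_derive; auto.
    replace (Derive (fun x : R => p x) s) with (- Derive g (q s))
      by (symmetry; apply is_derive_unique; exact H2).
    replace (Derive (fun x : R => q x) s) with (p s)
      by (symmetry; apply is_derive_unique; exact H1).
    replace (Derive (fun x : R => g x) (q s)) with (Derive g (q s)) by reflexivity.
    assert (Hr : forall D P : R, 1 * (-D) * ((1+1)*(P*1)) * /2 + 1*P*D = 0) by (intros; field). apply Hr. }
  destruct (mvt E (fun _ => 0) 0 t HE) as [c [_ Hc]].
  unfold E in Hc. rewrite Hp0, Hq0 in Hc. lra.
Qed.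

Lemma psq t : 2 <= p t ^2.
Proof. rewrite energy. pose proof (g_range qo). pose proof (g_range (q t)). lra. Qed.

Lemma ppos t : 0 < p t.
Proof.
  destruct (Rlt_dec 0 (p t)) as [|n]; auto. exfalso.
  assert (Hc : continuity p).
  { intro x. apply derivable_continuous_pt. exists (- Derive g (q x)). apply dp. }
  destruct (IVT_gen p 0 t 0 Hc) as [x [_ Hx]].
  - split. eapply Rle_trans. apply Rmin_r. lra.
    eapply Rle_trans with (p 0). lra. apply Rmax_l.
  - pose proof (psq x). rewrite Hx in H. lra.
Qed.

Lemma qincr a b : a <= b -> q a <= q b.
Proof.
  intros Hab. destruct (mvt q p a b dq) as [c [_ Hc]].
  pose proof (ppos c). nra.
Qed.

Lemma flat : 1 <= qo -> forall t, 0 <= t -> q t = qo + 2 * t.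
Proof.
  intros H1 t Ht.
  assert (Hpc : forall s, 0 <= s -> p s = 2).
  { intros s Hs0. destruct (mvt p (fun x => - Derive g (q x)) 0 s dp) as [c [Hc Hc2]].
    rewrite Rmin_left in Hc by lra.
    rewrite g_flat in Hc2. lra.
    pose proof (qincr 0 c (proj1 Hc)). lra. }
  destruct (mvt q p 0 t dq) as [c [Hc Hc2]].
  rewrite Rmin_left in Hc by lra.
  rewrite Hpc in Hc2 by lra. lra.
Qed.

End Sol.

Theorem lemma5p11 (qo qo' : R) (q p q' p' : R -> R) :
  0 <= qo -> qo < qo' ->
  is_global_solution q p -> q 0 = qo -> p 0 = 2 ->
  is_global_solution q' p' -> q' 0 = qo' -> p' 0 = 2 ->
  forall t : R, 0 <= t -> q t < q' t.
Proof.
  intros Hqo Hlt Hs Hq0 Hp0 Hs' Hq0' Hp0' t1 Ht1.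
  destruct (Rle_dec 1 qo) as [Hf|Hf].
  { rewrite (flat q p qo Hs Hq0 Hp0 Hf t1 Ht1).
    rewrite (flat q' p' qo' Hs' Hq0' Hp0' ltac:(lra) t1 Ht1). lra. }
  destruct (Rlt_dec (q t1) (q' t1)) as [|Hn]; auto. exfalso.
  set (d := fun t => q' t - q t).
  assert (Hdd : forall t, derivable_pt_lim d t (p' t - p t)).
  { intro s. apply (derivable_pt_lim_minus q' q). apply (dq _ _ Hs'). apply (dq _ _ Hs). }
  assert (Hd0 : 0 < d 0) by (unfold d; lra).
  assert (Hdt1 : d t1 <= 0) by (unfold d; lra).
  set (E := fun s => 0 <= s <= t1 /\ forall u, 0 <= u <= s -> 0 < d u).
  assert (Hb : bound E) by (exists t1; intros s [Hs1 _]; lra).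
  assert (HE0 : E 0) by (split; [lra| intros u Hu; replace u with 0 by lra; auto]).
  destruct (completeness E Hb (ex_intro _ 0 HE0)) as [c [Hub Hlub]].
  assert (Hc0 : 0 <= c) by (apply Hub; auto).
  assert (Hct : c <= t1) by (apply Hlub; intros s [Hs1 _]; lra).
  assert (Hpos : forall u, 0 <= u < c -> 0 < d u).
  { intros u Hu. destruct (Rlt_dec 0 (d u)) as [|n]; auto. exfalso.
    assert (c <= u).
    { apply Hlub. intros s [Hs1 Hall]. destruct (Rle_dec s u); auto.
      exfalso; apply n; apply Hall; lra. }
    lra. }
  assert (Hcpos : 0 < c).
  { destruct Hc0 as [|Hc0]; auto. subst c. exfalso.
    destruct (cont_eps d _ 0 Hdd (d 0) Hd0) as [de [Hde Hy]].
    assert (E (Rmin t1 (de/2))).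
    { assert (0 < t1) by (destruct Ht1; auto; subst; lra).
      assert (0 < Rmin t1 (de/2)) by (apply Rmin_glb_lt; lra).
      split. split. lra. apply Rmin_l.
      intros u Hu. assert (Rmin t1 (de/2) <= de/2) by apply Rmin_r.
      assert (Rabs (u - 0) < de) by (rewrite Rabs_pos_eq; lra).
      specialize (Hy u H2). apply Rabs_def2 in Hy. lra. }
    apply Hub in H. assert (0 < Rmin t1 (de/2)).
    { apply Rmin_glb_lt; try lra. destruct Ht1; auto; subst; lra. }
    lra. }
  assert (Hdc1 : 0 <= d c).
  { destruct (Rle_dec 0 (d c)) as [|n]; auto. exfalso.
    destruct (cont_eps d _ c Hdd (- d c) ltac:(lra)) as [de [Hde Hy]].
    set (u := Rmax 0 (c - de/2)).
    assert (0 <= u) by apply Rmax_l.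
    assert (c - de/2 <= u) by apply Rmax_r.
    assert (u < c) by (unfold u; apply Rmax_lub_lt; lra).
    assert (Rabs (u - c) < de) by (rewrite Rabs_left by lra; lra).
    specialize (Hy u H2). apply Rabs_def2 in Hy.
    pose proof (Hpos u ltac:(lra)). lra. }
  assert (Hdc2 : d c <= 0).
  { destruct (Rle_dec (d c) 0) as [|n]; auto. exfalso.
    destruct (Req_dec c t1). subst c. lra.
    destruct (cont_eps d _ c Hdd (d c) ltac:(lra)) as [de [Hde Hy]].
    set (s := Rmin t1 (c + de/2)).
    assert (s <= t1) by apply Rmin_l.
    assert (s <= c + de/2) by apply Rmin_r.
    assert (c < s) by (unfold s; apply Rmin_glb_lt; lra).
    assert (E s).
    { split. lra. intros u Hu.
      destruct (Rlt_dec u c). apply Hpos; lra.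
      assert (Rabs (u - c) < de) by (rewrite Rabs_pos_eq; lra).
      specialize (Hy u H3). apply Rabs_def2 in Hy. lra. }
    apply Hub in H3. lra. }
  assert (Hdc : d c = 0) by lra.
  assert (Hqc : q c = q' c) by (unfold d in Hdc; lra).
  assert (Hpp : p c < p' c).
  { pose proof (energy q p qo Hs Hq0 Hp0 c).
    pose proof (energy q' p' qo' Hs' Hq0' Hp0' c).
    pose proof (g_strict qo qo' ltac:(lra) Hlt).
    pose proof (ppos q p qo Hs Hq0 Hp0 c).
    pose proof (ppos q' p' qo' Hs' Hq0' Hp0' c).
    rewrite Hqc in H. nra. }
  set (l := p' c - p c).
  assert (Hl : 0 < l) by (unfold l; lra).
  destruct (Hdd c (l/2) ltac:(lra)) as [[de Hde] Hy]. simpl in Hy.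
  set (h := - Rmin (de/2) (c/2)).
  assert (Hm : 0 < Rmin (de/2) (c/2)) by (apply Rmin_glb_lt; lra).
  assert (Hm1 : Rmin (de/2) (c/2) <= de/2) by apply Rmin_l.
  assert (Hm2 : Rmin (de/2) (c/2) <= c/2) by apply Rmin_r.
  assert (Hh : h <> 0) by (unfold h; lra).
  assert (Hha : Rabs h < de) by (unfold h; rewrite Rabs_Ropp, Rabs_pos_eq; lra).
  specialize (Hy h Hh Hha). fold l in Hy.
  rewrite Hdc in Hy. apply Rabs_def2 in Hy.
  set (v := (d (c + h) - 0) / h) in Hy.
  assert (Hv : d (c + h) = v * h) by (unfold v; field; auto).
  pose proof (Hpos (c + h) ltac:(unfold h; lra)).
  assert (h < 0) by (unfold h; lra).
  nra.
Qed.
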